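(* Let $\beta,\mu,\tau>0$ be constants, let $g(x)=\dfrac{g^-\theta_g^n+g^+x^n}{\theta_g^n+x^n}$ with $g^\pm,\theta_g,n>0$, and put $g_0=\min\{g^-,g^+\}$, $g_U=\max\{g^-,g^+\}$. For $\xi>0$ let $\gamma=\gamma(\xi)=\frac{\beta}{\xi}e^{-\mu\tau}g(\xi)$, let $k\ge0$ be an integer and let $\omega_k>0$ satisfy $\omega_k\cot(\omega_k\tau)=-\gamma$ and $\omega_k\tau\in(\pi/2+2k\pi,\pi+2k\pi)$. Let $s_k(\xi)=\sqrt{1+(\omega_k/\gamma)^2}$. Then for all $\xi>0$: (1) $m_k(\xi)\le s_k(\xi)\le M_k(\xi)$, where $$m_k(\xi)=\Big(1+\Big(\frac{\pi(2k+1/2)}{\beta\tau e^{-\mu\tau}g_U}\Big)^2\xi^2\Big)^{1/2},\qquad M_k(\xi)=\Big(1+\Big(\frac{\pi(2k+1)}{\beta\tau e^{-\mu\tau}g_0}\Big)^2\xi^2\Big)^{1/2};$$ (2) $1<s_k(\xi)<1+\frac{\pi(2k+1)}{\beta\tau e^{-\mu\tau}g_0}\,\xi$. *)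

(* Defs.v *)
From Stdlib Require Export Reals.
Open Scope R_scope.

Definition hill (gm gp theta n x : R) : R :=
  (gm * Rpower theta n + gp * Rpower x n) / (Rpower theta n + Rpower x n).

Definition cot (y : R) : R := cos y / sin y.

Definition gamma_xi (beta mu tau gm gp theta n xi : R) : R :=
  beta / xi * exp (- mu * tau) * hill gm gp theta n xi.

(* Main.v *)
Require Import Defs.
From Stdlib Require Import Reals Lra.
Open Scope R_scope.

Lemma div_le_aux (p q r s : R) : 0 < q -> 0 < s -> p * s <= r * q -> p / q <= r / s.
Proof.
  intros Hq Hs H.
  replace (p / q) with ((p * s) * / (q * s)) by (field; lra).
  replace (r / s) with ((r * q) * / (q * s)) by (field; lra).
  apply Rmult_le_compat_r; [left; apply Rinv_0_lt_compat; nra | assumption].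
Qed.

Lemma hill_lo (gm gp a b m : R) : 0 < a -> 0 < b -> m <= gm -> m <= gp ->
  m <= (gm * a + gp * b) / (a + b).
Proof.
  intros Ha Hb H1 H2.
  replace m with ((m * a + m * b) / (a + b)) at 1 by (field; lra).
  apply div_le_aux; try lra.
  apply Rmult_le_compat_r; nra.
Qed.

Lemma hill_hi (gm gp a b m : R) : 0 < a -> 0 < b -> gm <= m -> gp <= m ->
  (gm * a + gp * b) / (a + b) <= m.
Proof.
  intros Ha Hb H1 H2.
  replace m with ((m * a + m * b) / (a + b)) at 1 by (field; lra).
  apply div_le_aux; try lra.
  apply Rmult_le_compat_r; nra.
Qed.

Theorem proposition5p2 :
  forall (beta mu tau gm gp theta n : R),
  0 < beta -> 0 < mu -> 0 < tau ->
  0 < gm -> 0 < gp -> 0 < theta -> 0 < n ->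
  forall (xi : R) (k : nat) (omega : R),
  0 < xi ->
  0 < omega ->
  omega * cot (omega * tau) = - gamma_xi beta mu tau gm gp theta n xi ->
  PI / 2 + 2 * INR k * PI < omega * tau < PI + 2 * INR k * PI ->
  let g0 := Rmin gm gp in
  let gU := Rmax gm gp in
  let gam := gamma_xi beta mu tau gm gp theta n xi in
  let s := sqrt (1 + (omega / gam) ^ 2) in
  let mk := sqrt (1 + (PI * (2 * INR k + 1 / 2) / (beta * tau * exp (- mu * tau) * gU)) ^ 2 * xi ^ 2) in
  let Mk := sqrt (1 + (PI * (2 * INR k + 1) / (beta * tau * exp (- mu * tau) * g0)) ^ 2 * xi ^ 2) in
  (mk <= s <= Mk) /\
  (1 < s < 1 + PI * (2 * INR k + 1) / (beta * tau * exp (- mu * tau) * g0) * xi).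
Proof.
  intros beta mu tau gm gp theta n Hb Hmu Ht Hgm Hgp Hth Hn xi k omega Hxi Hom _ Hw.
  intros g0 gU gam s mk Mk.
  set (E := exp (- mu * tau)).
  assert (HE : 0 < E) by apply exp_pos.
  set (a := Rpower theta n). set (b := Rpower xi n).
  assert (Ha : 0 < a) by (unfold a, Rpower; apply exp_pos).
  assert (Hb' : 0 < b) by (unfold b, Rpower; apply exp_pos).
  set (g := hill gm gp theta n xi).
  assert (Hg0 : g0 <= g).
  { unfold g, hill; fold a b; apply hill_lo; auto; [apply Rmin_l | apply Rmin_r]. }
  assert (HgU : g <= gU).
  { unfold g, hill; fold a b; apply hill_hi; auto; [apply Rmax_l | apply Rmax_r]. }
  assert (Hg0p : 0 < g0) by (unfold g0, Rmin; destruct Rle_dec; lra).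
  assert (Hgp' : 0 < g) by lra.
  assert (Hgam : gam = beta * E * g / xi) by (unfold gam, gamma_xi; fold E g; field; lra).
  assert (Hx : omega / gam = omega * xi / (beta * E * g)) by (rewrite Hgam; field; repeat split; lra).
  clearbody g a b.
  assert (HPI := PI_RGT_0). assert (Hk := pos_INR k).
  set (P := PI * (2 * INR k + 1 / 2)). set (Q := PI * (2 * INR k + 1)).
  assert (HP : P <= omega * tau) by (unfold P; lra).
  assert (HQ : omega * tau <= Q) by (unfold Q; lra).
  assert (HPp : 0 < P) by (unfold P; nra).
  assert (HbE : 0 < beta * E) by nra.
  assert (HgUp : 0 < gU) by lra.
  set (x := omega / gam). set (A := P / (beta * tau * E * gU) * xi).
  set (B := Q / (beta * tau * E * g0) * xi).
  assert (HAx : A <= x).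
  { unfold x, A; rewrite Hx.
    replace (P / (beta * tau * E * gU) * xi) with ((P * xi) / (beta * tau * E * gU)) by (field; repeat split; lra).
    apply div_le_aux; try (repeat apply Rmult_lt_0_compat; lra).
    assert (P * g <= omega * tau * gU) by (apply Rmult_le_compat; lra). idtac "A".
    assert (0 <= beta * E * xi) by nra.
    replace (P * xi * (beta * E * g)) with ((P * g) * (beta * E * xi)) by ring.
    replace (omega * xi * (beta * tau * E * gU)) with ((omega * tau * gU) * (beta * E * xi)) by ring.
    apply Rmult_le_compat_r; auto. }
  assert (HxB : x <= B).
  { unfold x, B; rewrite Hx.
    replace (Q / (beta * tau * E * g0) * xi) with ((Q * xi) / (beta * tau * E * g0)) by (field; repeat split; lra).
    apply div_le_aux; [ repeat apply Rmult_lt_0_compat; lra | repeat apply Rmult_lt_0_compat; lra | ].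
    assert (omega * tau * g0 <= Q * g) by (apply Rmult_le_compat; nra).
    assert (0 <= beta * E * xi) by nra.
    replace (Q * xi * (beta * E * g)) with ((Q * g) * (beta * E * xi)) by ring.
    replace (omega * xi * (beta * tau * E * g0)) with ((omega * tau * g0) * (beta * E * xi)) by ring.
    apply Rmult_le_compat_r; auto. }
  assert (HA0 : 0 < A) by (unfold A; apply Rmult_lt_0_compat; [apply Rdiv_lt_0_compat; [lra | repeat apply Rmult_lt_0_compat; lra] | lra]).
  assert (Hx0 : 0 < x) by lra.
  split; [split|split].
  - unfold mk, s; fold E x P.
    replace ((P / (beta * tau * E * gU)) ^ 2 * xi ^ 2) with (A ^ 2) by (unfold A; ring).
    apply sqrt_le_1_alt. apply Rplus_le_compat_l. apply pow_incr; lra.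
  - unfold Mk, s; fold E x Q.
    replace ((Q / (beta * tau * E * g0)) ^ 2 * xi ^ 2) with (B ^ 2) by (unfold B; ring).
    apply sqrt_le_1_alt. apply Rplus_le_compat_l. apply pow_incr; lra.
  - unfold s; fold x. rewrite <- sqrt_1 at 1. apply sqrt_lt_1_alt. nra.
  - unfold s; fold E x Q. fold B.
    rewrite <- (sqrt_pow2 (1 + B)) by lra.
    apply sqrt_lt_1_alt. nra.
Qed.
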